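(* Let $\varphi(z)=1+B_1z+B_2z^2+\cdots$ be as in the context and let $f(z)=z+\sum_{n\ge2}a_nz^n\in\mathcal S^*_\Sigma(\varphi)$. Then $|a_3-a_2^2|\le\dfrac{B_1}{2}$.
   Context: Let $\mathbb U=\{z\in\mathbb C:|z|<1\}$; $\mathcal A$ is the class of $f(z)=z+\sum_{n\ge2}a_nz^n$ analytic in $\mathbb U$; $\Sigma$ is the class of $f\in\mathcal A$ univalent in $\mathbb U$ whose inverse extends to an analytic univalent function $g=f^{-1}$ on $\mathbb U$. $F\prec G$ means $F=G\circ w$ for some analytic $w:\mathbb U\to\mathbb U$ with $w(0)=0$. $\varphi$ is analytic and univalent in $\mathbb U$ with $\Re\varphi>0$, $\varphi(0)=1$, $\varphi'(0)>0$, $\varphi(\mathbb U)$ starlike with respect to $1$ and symmetric with respect to the real axis, $\varphi(z)=1+B_1z+B_2z^2+\cdots$ with real $B_j$, $B_1>0$. $\mathcal S^*_\Sigma(\varphi)$ (bi-starlike of Ma–Minda type) is the set of $f\in\Sigma$ with $\frac{zf'(z)}{f(z)}\prec\varphi(z)$ and $\frac{wg'(w)}{g(w)}\prec\varphi(w)$, $g=f^{-1}$. *)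

(* Defs.v *)
From Stdlib Require Import Reals.
Open Scope R_scope.

Record Cpx : Type := mkC { Cre : R ; Cim : R }.

Definition C0 : Cpx := mkC 0 0.
Definition C1 : Cpx := mkC 1 0.
Definition Cadd (z w : Cpx) : Cpx := mkC (Cre z + Cre w) (Cim z + Cim w).
Definition Copp (z : Cpx) : Cpx := mkC (- Cre z) (- Cim z).
Definition Csub (z w : Cpx) : Cpx := Cadd z (Copp w).
Definition Cmul (z w : Cpx) : Cpx :=
  mkC (Cre z * Cre w - Cim z * Cim w) (Cre z * Cim w + Cim z * Cre w).
Definition Cnorm2 (z : Cpx) : R := Cre z * Cre z + Cim z * Cim z.
Definition Cinv (z : Cpx) : Cpx := mkC (Cre z / Cnorm2 z) (- Cim z / Cnorm2 z).
Definition Cdiv (z w : Cpx) : Cpx := Cmul z (Cinv w).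
Definition Cmod (z : Cpx) : R := sqrt (Cnorm2 z).
Definition Cconj (z : Cpx) : Cpx := mkC (Cre z) (- Cim z).
Definition RtoC (r : R) : Cpx := mkC r 0.
Fixpoint Cpow (z : Cpx) (n : nat) : Cpx :=
  match n with O => C1 | S m => Cmul z (Cpow z m) end.

Definition in_U (z : Cpx) : Prop := Cmod z < 1.

Fixpoint psum (a : nat -> Cpx) (z : Cpx) (N : nat) : Cpx :=
  match N with
  | O => a O
  | S M => Cadd (psum a z M) (Cmul (a (S M)) (Cpow z (S M)))
  end.

Definition sums (a : nat -> Cpx) (z L : Cpx) : Prop :=
  Un_cv (fun N => Cre (psum a z N)) (Cre L) /\
  Un_cv (fun N => Cim (psum a z N)) (Cim L).

(* F is analytic in U, with Taylor series sum a_n z^n at 0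
   (an analytic function on U is represented on all of U by its Taylor series at 0) *)
Definition repr (F : Cpx -> Cpx) (a : nat -> Cpx) : Prop :=
  forall z, in_U z -> sums a z (F z).

Definition univalent_U (F : Cpx -> Cpx) : Prop :=
  forall z1 z2, in_U z1 -> in_U z2 -> F z1 = F z2 -> z1 = z2.

(* coefficients of F' and of F(z)/z *)
Definition dcoef (a : nat -> Cpx) (n : nat) : Cpx := Cmul (RtoC (INR (S n))) (a (S n)).
Definition shift (a : nat -> Cpx) (n : nat) : Cpx := a (S n).

Definition subord (F G : Cpx -> Cpx) : Prop :=
  exists (w : Cpx -> Cpx) (c : nat -> Cpx),
    repr w c /\ c O = C0 /\
    (forall z, in_U z -> in_U (w z)) /\
    (forall z, in_U z -> F z = G (w z)).

(* z F'(z)/F(z) ≺ phi, where F has Taylor coefficients a with a_0 = 0;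
   z F'(z)/F(z) = F'(z) / (F(z)/z), with F(z)/z the series sum a_{n+1} z^n *)
Definition starlike_subord (a : nat -> Cpx) (phi : Cpx -> Cpx) : Prop :=
  exists fp h : Cpx -> Cpx,
    repr fp (dcoef a) /\ repr h (shift a) /\
    subord (fun z => Cdiv (fp z) (h z)) phi.

Definition MaMinda (phi : Cpx -> Cpx) (B : nat -> Cpx) : Prop :=
  repr phi B /\ univalent_U phi /\
  (forall z, in_U z -> 0 < Cre (phi z)) /\
  B O = C1 /\
  (forall j, Cim (B j) = 0) /\
  0 < Cre (B 1%nat) /\
  (* phi(U) starlike with respect to 1 *)
  (forall z t, in_U z -> 0 <= t <= 1 ->
     exists u, in_U u /\ phi u = Cadd C1 (Cmul (RtoC t) (Csub (phi z) C1))) /\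
  (* phi(U) symmetric with respect to the real axis *)
  (forall z, in_U z -> exists u, in_U u /\ phi u = Cconj (phi z)).

(* f in Sigma (normalized, univalent, inverse extends analytically and univalently to U),
   and f in S*_Sigma(phi) *)
Definition bi_starlike (f : Cpx -> Cpx) (a : nat -> Cpx) (phi : Cpx -> Cpx) : Prop :=
  repr f a /\ a O = C0 /\ a 1%nat = C1 /\ univalent_U f /\
  starlike_subord a phi /\
  exists (g : Cpx -> Cpx) (b : nat -> Cpx),
    repr g b /\ univalent_U g /\
    (exists r, 0 < r /\ forall w, Cmod w < r -> in_U (g w) /\ f (g w) = w) /\
    starlike_subord b phi.

(* Main.v *)
Require Import Defs.
From Stdlib Require Import Reals.
Open Scope R_scope.
From Stdlib Require Import Lra Lia Psatz Arith.


Lemma Cext z w : Cre z = Cre w -> Cim z = Cim w -> z = w.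
Proof. destruct z, w; simpl; intros; subst; reflexivity. Qed.

Ltac cunf := unfold Csub, Cadd, Copp, Cmul, RtoC, C0, Defs.C1, Cconj in *; simpl in *.
Ltac ceq := apply Cext; cunf; ring.

Definition N1 z := Rabs (Cre z) + Rabs (Cim z).

Lemma N1_pos z : 0 <= N1 z.
Proof. unfold N1; pose proof (Rabs_pos (Cre z)); pose proof (Rabs_pos (Cim z)); lra. Qed.

Lemma N1_add z w : N1 (Cadd z w) <= N1 z + N1 w.
Proof.
  unfold N1; cunf.
  pose proof (Rabs_triang (Cre z) (Cre w)); pose proof (Rabs_triang (Cim z) (Cim w)); lra.
Qed.

Lemma N1_opp z : N1 (Copp z) = N1 z.
Proof. unfold N1; cunf; rewrite !Rabs_Ropp; lra. Qed.

Lemma N1_sub z w : N1 (Csub z w) <= N1 z + N1 w.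
Proof. unfold Csub; rewrite <- (N1_opp w); apply N1_add. Qed.

Lemma N1_mul z w : N1 (Cmul z w) <= N1 z * N1 w.
Proof.
  unfold N1; cunf.
  destruct z as [a b], w as [c d]; simpl.
  pose proof (Rabs_triang (a*c) (- (b*d))); pose proof (Rabs_triang (a*d) (b*c)).
  rewrite Rabs_Ropp in *. rewrite !Rabs_mult in *.
  unfold Rminus.
  pose proof (Rabs_pos a); pose proof (Rabs_pos b); pose proof (Rabs_pos c); pose proof (Rabs_pos d).
  nra.
Qed.

Lemma N1_RtoC t : N1 (RtoC t) = Rabs t.
Proof. unfold N1; cunf; rewrite Rabs_R0; lra. Qed.

Lemma Re_le_N1 z : Rabs (Cre z) <= N1 z.
Proof. unfold N1; pose proof (Rabs_pos (Cim z)); lra. Qed.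
Lemma Im_le_N1 z : Rabs (Cim z) <= N1 z.
Proof. unfold N1; pose proof (Rabs_pos (Cre z)); lra. Qed.

Lemma sq_abs x : x * x = Rabs x * Rabs x.
Proof. destruct (Rcase_abs x); [rewrite Rabs_left|rewrite Rabs_right]; lra. Qed.

Lemma Cmod_le_N1 z : Cmod z <= N1 z.
Proof.
  unfold Cmod, Cnorm2, N1.
  rewrite <- (sqrt_square (Rabs (Cre z) + Rabs (Cim z))) by (pose proof (Rabs_pos (Cre z)); pose proof (Rabs_pos (Cim z)); lra).
  apply sqrt_le_1.
  - nra.
  - pose proof (Rabs_pos (Cre z)); pose proof (Rabs_pos (Cim z)); nra.
  - rewrite (sq_abs (Cre z)), (sq_abs (Cim z)).
    pose proof (Rabs_pos (Cre z)); pose proof (Rabs_pos (Cim z)); nra.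
Qed.

Lemma Cpow_RtoC x n : Cpow (RtoC x) n = RtoC (x ^ n).
Proof. induction n; simpl. - ceq. - rewrite IHn. ceq. Qed.

Lemma N1_C1 : N1 Defs.C1 = 1.
Proof. unfold N1; cunf; rewrite Rabs_R1, Rabs_R0; lra. Qed.

Lemma N1_pow z n : N1 (Cpow z n) <= N1 z ^ n.
Proof.
  induction n; simpl. - rewrite N1_C1; lra.
  - eapply Rle_trans. apply N1_mul. apply Rmult_le_compat_l. apply N1_pos. exact IHn.
Qed.

Lemma cv_const c : Un_cv (fun _ => c) c.
Proof. intros e He; exists O; intros; unfold Rdist; rewrite Rminus_diag, Rabs_R0; lra. Qed.

Lemma cv_lin x y X Y al be : Un_cv x X -> Un_cv y Y ->
  Un_cv (fun n => al * x n + be * y n) (al * X + be * Y).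
Proof.
  intros Hx Hy. apply CV_plus; apply CV_mult; auto; apply cv_const.
Qed.

Lemma cv_le u l b n0 : Un_cv u l -> (forall n, (n >= n0)%nat -> u n <= b) -> l <= b.
Proof.
  intros Hu Hb. destruct (Rle_dec l b) as [|Hn]; auto. exfalso.
  destruct (Hu (l - b)) as [N HN]; [lra|].
  specialize (HN (max N n0) (Nat.le_max_l _ _)). specialize (Hb (max N n0) (Nat.le_max_r _ _)).
  unfold Rdist in HN. apply Rabs_def2 in HN. lra.
Qed.

Lemma cv_ge u l b n0 : Un_cv u l -> (forall n, (n >= n0)%nat -> b <= u n) -> b <= l.
Proof.
  intros Hu Hb. destruct (Rle_dec b l) as [|Hn]; auto. exfalso.
  destruct (Hu (b - l)) as [N HN]; [lra|].
  specialize (HN (max N n0) (Nat.le_max_l _ _)). specialize (Hb (max N n0) (Nat.le_max_r _ _)).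
  unfold Rdist in HN. apply Rabs_def2 in HN. lra.
Qed.

Fixpoint sumN (f : nat -> R) (n : nat) : R :=
  match n with O => 0 | S m => sumN f m + f m end.

Lemma sumN_ge f n k : (k < n)%nat -> (forall i, 0 <= f i) -> f k <= sumN f n.
Proof.
  intros Hk Hf. induction n. lia. simpl.
  assert (0 <= sumN f n).
  { clear Hk IHn. induction n; simpl. lra. specialize (Hf n). lra. }
  destruct (Nat.eq_dec k n). subst. lra.
  assert (k < n)%nat by lia. specialize (IHn H0). specialize (Hf n). lra.
Qed.

Lemma cv_bounded u l : Un_cv u l -> exists M, forall n, Rabs (u n) <= M.
Proof.
  intros Hu. destruct (Hu 1) as [N HN]; [lra|].
  exists (Rabs l + 1 + sumN (fun i => Rabs (u i)) N). intros n.
  assert (0 <= sumN (fun i => Rabs (u i)) N).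
  { clear. induction N; simpl. lra. pose proof (Rabs_pos (u N)). lra. }
  destruct (le_lt_dec N n).
  - specialize (HN n l0). unfold Rdist in HN.
    pose proof (Rabs_triang_inv (u n) l). pose proof (Rabs_pos l). lra.
  - pose proof (sumN_ge (fun i => Rabs (u i)) N n l0 (fun i => Rabs_pos _)). simpl in H0.
    pose proof (Rabs_pos l). lra.
Qed.


Lemma Cmod_RtoC t : Cmod (RtoC t) = Rabs t.
Proof. unfold Cmod, Cnorm2, RtoC; simpl. replace (t*t+0*0) with (Rsqr t) by (unfold Rsqr; ring).
  apply sqrt_Rsqr_abs. Qed.

Lemma in_U_N1 z : N1 z < 1 -> in_U z.
Proof. unfold in_U; pose proof (Cmod_le_N1 z); lra. Qed.

Lemma coef_bound F a r : repr F a -> 0 < r < 1 -> exists M, forall n, N1 (a n) * r ^ n <= M.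
Proof.
  intros HF Hr.
  assert (HU : in_U (RtoC r)) by (unfold in_U; rewrite Cmod_RtoC, Rabs_pos_eq; lra).
  destruct (HF _ HU) as [Hre Him].
  destruct (cv_bounded _ _ Hre) as [Mu HMu].
  destruct (cv_bounded _ _ Him) as [Mv HMv].
  exists (2*Mu + 2*Mv). intros n.
  assert (Hd : forall n, Cre (a n) * r ^ n = Cre (psum a (RtoC r) n) - match n with O => 0 | S m => Cre (psum a (RtoC r) m) end
             /\ Cim (a n) * r ^ n = Cim (psum a (RtoC r) n) - match n with O => 0 | S m => Cim (psum a (RtoC r) m) end).
  { intros [|m]; simpl. split; ring.
    rewrite Cpow_RtoC. cunf. split; ring. }
  destruct (Hd n) as [H1 H2].
  assert (Hp : 0 <= r ^ n) by (apply pow_le; lra).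
  assert (E1 : Rabs (Cre (a n)) * r ^ n <= 2 * Mu).
  { rewrite <- (Rabs_pos_eq (r^n)) at 1 by lra. rewrite <- Rabs_mult, H1.
    pose proof (HMu n). pose proof (Rabs_pos (Cre (psum a (RtoC r) n))).
    destruct n; [rewrite Rminus_0_r; lra|].
    pose proof (HMu n). eapply Rle_trans. apply Rabs_triang. rewrite Rabs_Ropp. lra. }
  assert (E2 : Rabs (Cim (a n)) * r ^ n <= 2 * Mv).
  { rewrite <- (Rabs_pos_eq (r^n)) at 1 by lra. rewrite <- Rabs_mult, H2.
    pose proof (HMv n). pose proof (Rabs_pos (Cim (psum a (RtoC r) n))).
    destruct n; [rewrite Rminus_0_r; lra|].
    pose proof (HMv n). eapply Rle_trans. apply Rabs_triang. rewrite Rabs_Ropp. lra. }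
  unfold N1. lra.
Qed.

Definition gterm (x : R) (p j : nat) : R := if Nat.leb p j then x ^ j else 0.

Lemma geo_id x p n : sumN (gterm x p) n * (1 - x) = if Nat.leb p n then x ^ p - x ^ n else 0.
Proof.
  induction n; simpl.
  - destruct p; simpl; ring.
  - unfold gterm at 2. rewrite Rmult_plus_distr_r, IHn.
    destruct (Nat.leb_spec p n); destruct (Nat.leb_spec p (S n)); try lia.
    + simpl; ring.
    + assert (p = S n) by lia. subst. simpl. ring.
    + ring.
Qed.

Lemma geo_bound x p n : 0 <= x < 1 -> sumN (gterm x p) n <= x ^ p / (1 - x).
Proof.
  intros Hx. pose proof (geo_id x p n).
  apply (Rmult_le_reg_r (1 - x)); [lra|]. unfold Rdiv. rewrite Rmult_assoc, Rinv_l, Rmult_1_r by lra.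
  rewrite H. destruct (Nat.leb p n). pose proof (pow_le x n (proj1 Hx)). lra. apply pow_le; lra.
Qed.

Definition poly2 (x0 x1 x2 u : Cpx) : Cpx := Cadd x0 (Cadd (Cmul x1 u) (Cmul x2 (Cmul u u))).

Lemma sumN_ext f g n : (forall i, f i <= g i) -> sumN f n <= sumN g n.
Proof. intros H; induction n; simpl. lra. specialize (H n); lra. Qed.

Lemma sumN_scal c f n : sumN (fun i => c * f i) n = c * sumN f n.
Proof. induction n; simpl. ring. rewrite IHn; ring. Qed.

Lemma series_local F a : repr F a -> exists K, 0 <= K /\ forall z, N1 z <= 1/4 ->
  N1 (Csub (F z) (poly2 (a O) (a 1%nat) (a 2%nat) z)) <= K * N1 z ^ 3.
Proof.
  intros HF. destruct (coef_bound F a (1/2) HF) as [M HM]; [lra|].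
  assert (HM0 : 0 <= M) by (specialize (HM O); simpl in HM; pose proof (N1_pos (a O)); lra).
  exists (32 * M). split; [lra|]. intros z Hz.
  set (s := N1 z). assert (Hs : 0 <= s) by apply N1_pos.
  set (T := fun N => Csub (psum a z N) (poly2 (a O) (a 1%nat) (a 2%nat) z)).
  assert (Hterm : forall j, N1 (Cmul (a j) (Cpow z j)) <= M * (2 * s) ^ j).
  { intros j. eapply Rle_trans. apply N1_mul.
    eapply Rle_trans. apply Rmult_le_compat_l. apply N1_pos. apply N1_pow.
    specialize (HM j). replace ((2*s)^j) with (2^j * s^j) by (rewrite Rpow_mult_distr; ring).
    assert (E : N1 (a j) * N1 z ^ j = ((N1 (a j) * (1/2)^j) * (2^j)) * s^j).
    { unfold s. replace (1/2) with (/2) by field. rewrite pow_inv. field. apply pow_nonzero; lra. }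
    rewrite E. rewrite <- Rmult_assoc.
    apply Rmult_le_compat_r. apply pow_le; lra. apply Rmult_le_compat_r. apply pow_le; lra. exact HM. }
  assert (HT : forall k, N1 (T (2 + k)%nat) <= M * sumN (gterm (2*s) 3) (S (2 + k))).
  { induction k.
    - replace (T (2+0)%nat) with C0 by (unfold T, poly2; simpl; ceq).
      unfold N1, C0; simpl. rewrite Rabs_R0. unfold gterm; simpl. lra.
    - replace (T (2 + S k)%nat) with (Cadd (T (2 + k)%nat) (Cmul (a (S (2+k))) (Cpow z (S (2 + k))))).
      2:{ unfold T. simpl. ceq. }
      eapply Rle_trans. apply N1_add.
      replace (S (2 + S k)) with (S (S (2 + k))) by lia.
      change (sumN (gterm (2*s) 3) (S (S (2+k)))) with (sumN (gterm (2*s) 3) (S (2+k)) + gterm (2*s) 3 (S (2+k))).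
      assert (G : gterm (2*s) 3 (S (2+k)) = (2*s)^(S(2+k))).
      { unfold gterm. replace (Nat.leb 3 (S (2 + k))) with true by (symmetry; apply Nat.leb_le; lia). reflexivity. }
      rewrite G, Rmult_plus_distr_l.
      specialize (Hterm (S (2 + k))). lra. }
  assert (Hs2 : 0 <= 2 * s < 1) by (unfold s in *; lra).
  assert (HB : forall N, (N >= 2)%nat -> N1 (T N) <= 16 * M * s ^ 3).
  { intros N HN. replace N with (2 + (N - 2))%nat by lia.
    eapply Rle_trans. apply HT. pose proof (geo_bound (2*s) 3 (S (2 + (N - 2))) Hs2).
    eapply Rle_trans. apply Rmult_le_compat_l. exact HM0. exact H.
    replace ((2*s)^3) with (8 * s^3) by ring.
    assert (0 <= s^3) by (apply pow_le; lra).
    apply (Rmult_le_reg_r (1 - 2*s)); [lra|].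
    unfold Rdiv. replace (M * (8 * s ^ 3 * / (1 - 2 * s)) * (1 - 2 * s)) with (M * (8 * s^3)) by (field; lra).
    assert (s <= 1/4) by (unfold s; lra). assert (0 <= M*s^3) by (apply Rmult_le_pos; lra). nra. }
  assert (HU : in_U z) by (apply in_U_N1; unfold s in *; lra).
  destruct (HF z HU) as [Hre Him].
  set (P := poly2 (a O) (a 1%nat) (a 2%nat) z) in *.
  assert (C1' : Rabs (Cre (Csub (F z) P)) <= 16 * M * s ^ 3).
  { apply (cv_le (fun N => Rabs (Cre (T N))) _ _ 2%nat).
    - apply cv_cvabs. unfold T. cunf. apply CV_minus. exact Hre. apply cv_const.
    - intros N HN. eapply Rle_trans. apply Re_le_N1. apply HB; auto. }
  assert (C2' : Rabs (Cim (Csub (F z) P)) <= 16 * M * s ^ 3).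
  { apply (cv_le (fun N => Rabs (Cim (T N))) _ _ 2%nat).
    - apply cv_cvabs. unfold T. cunf. apply CV_minus. exact Him. apply cv_const.
    - intros N HN. eapply Rle_trans. apply Im_le_N1. apply HB; auto. }
  unfold N1 at 1. lra.
Qed.


Definition rjet (f : R -> R) (x0 x1 x2 : R) : Prop :=
  exists d K, 0 < d /\ forall t, 0 < Rabs t < d -> Rabs (f t - (x0 + x1 * t + x2 * (t * t))) <= K * Rabs t ^ 3.

Lemma zero_lin a C d : 0 < d -> (forall t, 0 < t < d -> Rabs a <= C * t) -> a = 0.
Proof.
  intros Hd H. destruct (Req_dec a 0) as [|Ha]; auto. exfalso.
  assert (HA : 0 < Rabs a) by (apply Rabs_pos_lt; auto).
  set (C' := Rabs C + 1).
  set (t := Rmin (d/2) (Rabs a / (2 * C'))).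
  assert (HC' : 0 < C') by (unfold C'; pose proof (Rabs_pos C); lra).
  assert (Ht1 : t <= d/2) by apply Rmin_l.
  assert (Ht2 : t <= Rabs a / (2*C')) by apply Rmin_r.
  assert (Ht0 : 0 < t) by (apply Rmin_glb_lt; [lra| apply Rdiv_lt_0_compat; lra]).
  assert (Htd : t < d) by lra. specialize (H t (conj Ht0 Htd)).
  assert (C * t <= C' * t) by (unfold C'; pose proof (Rle_abs C); nra).
  assert (C' * t <= Rabs a / 2).
  { apply (Rmult_le_compat_l C') in Ht2; [|lra]. replace (C' * (Rabs a / (2 * C'))) with (Rabs a / 2) in Ht2 by (field; lra). lra. }
  lra.
Qed.

Lemma pow_le_t t n : 0 <= t <= 1 -> t ^ (S n) <= t.
Proof. intros Ht. simpl. assert (t^n <= 1) by (rewrite <- (pow1 n); apply pow_incr; lra).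
  pose proof (pow_le t n (proj1 Ht)). nra. Qed.

Lemma Kpow K t n : 0 <= t <= 1 -> K * t ^ (S n) <= Rabs K * t.
Proof. intros Ht. pose proof (pow_le_t t n Ht). pose proof (pow_le t (S n) (proj1 Ht)).
  pose proof (Rle_abs K). pose proof (Rabs_pos K). nra. Qed.

Lemma poly_zero a b c d K : 0 < d -> (forall t, 0 < t < d -> Rabs (a + b * t + c * (t * t)) <= K * t ^ 3) ->
  a = 0 /\ b = 0 /\ c = 0.
Proof.
  intros Hd H. set (d' := Rmin d 1).
  assert (Hd' : 0 < d') by (apply Rmin_glb_lt; lra).
  assert (Hd1 : d' <= d) by apply Rmin_l. assert (Hd2 : d' <= 1) by apply Rmin_r.
  assert (Ha : a = 0).
  { apply (zero_lin a (Rabs b + Rabs c + Rabs K) d'); auto. intros t Ht.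
    specialize (H t ltac:(lra)).
    assert (Rabs a <= Rabs (a + b*t + c*(t*t)) + Rabs b * t + Rabs c * (t*t)).
    { replace a with ((a + b*t + c*(t*t)) + (- (b*t)) + (- (c*(t*t)))) at 1 by ring.
      eapply Rle_trans. apply Rabs_triang. eapply Rle_trans. apply Rplus_le_compat_r. apply Rabs_triang.
      rewrite !Rabs_Ropp, !Rabs_mult, (Rabs_pos_eq t) by lra. lra. }
    pose proof (Rle_abs K). pose proof (Rabs_pos b). pose proof (Rabs_pos c).
    assert (K * t^3 <= Rabs K * t) by (apply Kpow; lra).
    assert (Rabs c * (t*t) <= Rabs c * t) by (apply Rmult_le_compat_l; nra). lra. }
  subst a.
  assert (Hb : b = 0).
  { apply (zero_lin b (Rabs c + Rabs K) d'); auto. intros t Ht.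
    specialize (H t ltac:(lra)).
    replace (0 + b * t + c * (t*t)) with (t * (b + c * t)) in H by ring.
    rewrite Rabs_mult, (Rabs_pos_eq t) in H by lra.
    assert (Rabs (b + c*t) <= K * t^2).
    { apply (Rmult_le_reg_l t); [lra|]. simpl in *. nra. }
    assert (Rabs b <= Rabs (b + c*t) + Rabs c * t).
    { replace b with ((b + c*t) + (- (c*t))) at 1 by ring.
      eapply Rle_trans. apply Rabs_triang. rewrite Rabs_Ropp, Rabs_mult, (Rabs_pos_eq t) by lra. lra. }
    pose proof (Rle_abs K). pose proof (Rabs_pos c).
    assert (K * t^2 <= Rabs K * t) by (apply Kpow; lra). lra. }
  subst b. split; auto. split; auto.
  apply (zero_lin c K d'); auto. intros t Ht.
  specialize (H t ltac:(lra)).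
  replace (0 + 0 * t + c * (t*t)) with (c * (t*t)) in H by ring.
  rewrite Rabs_mult, (Rabs_pos_eq (t*t)) in H by nra.
  apply (Rmult_le_reg_r (t*t)); [nra|]. simpl in H. nra.
Qed.

Lemma rjet_unique f x0 x1 x2 y0 y1 y2 : rjet f x0 x1 x2 -> rjet f y0 y1 y2 ->
  x0 = y0 /\ x1 = y1 /\ x2 = y2.
Proof.
  intros [d1 [K1 [Hd1 H1]]] [d2 [K2 [Hd2 H2]]].
  assert (P : (x0 - y0) = 0 /\ (x1 - y1) = 0 /\ (x2 - y2) = 0).
  { apply (poly_zero _ _ _ (Rmin d1 d2) (K1 + K2)). apply Rmin_glb_lt; lra.
    intros t Ht. pose proof (Rmin_l d1 d2). pose proof (Rmin_r d1 d2).
    assert (Hat : Rabs t = t) by (apply Rabs_pos_eq; lra).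
    specialize (H1 t ltac:(lra)). specialize (H2 t ltac:(lra)). rewrite Hat in *.
    replace ((x0 - y0) + (x1 - y1) * t + (x2 - y2) * (t*t)) with
      ((f t - (y0 + y1 * t + y2 * (t*t))) + - (f t - (x0 + x1 * t + x2 * (t*t)))) by ring.
    eapply Rle_trans. apply Rabs_triang. rewrite Rabs_Ropp. lra. }
  lra.
Qed.

Lemma rjet_perturb f g x0 x1 x2 : (exists d K, 0 < d /\ forall t, 0 < Rabs t < d -> Rabs (f t - g t) <= K * Rabs t ^ 3) ->
  rjet g x0 x1 x2 -> rjet f x0 x1 x2.
Proof.
  intros [d1 [K1 [Hd1 H1]]] [d2 [K2 [Hd2 H2]]].
  exists (Rmin d1 d2), (K1 + K2). split. apply Rmin_glb_lt; lra.
  intros t Ht. pose proof (Rmin_l d1 d2). pose proof (Rmin_r d1 d2).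
  specialize (H1 t ltac:(lra)). specialize (H2 t ltac:(lra)).
  replace (f t - (x0 + x1 * t + x2 * (t * t))) with ((f t - g t) + (g t - (x0 + x1 * t + x2 * (t * t)))) by ring.
  eapply Rle_trans. apply Rabs_triang. lra.
Qed.

Lemma rjet_ext f g x0 x1 x2 : (exists d, 0 < d /\ forall t, 0 < Rabs t < d -> f t = g t) ->
  rjet g x0 x1 x2 -> rjet f x0 x1 x2.
Proof.
  intros [d [Hd H]]. apply rjet_perturb. exists d, 0. split; auto. intros t Ht.
  rewrite H by auto. rewrite Rminus_diag, Rabs_R0. lra.
Qed.

Lemma rjet_const c : rjet (fun _ => c) c 0 0.
Proof. exists 1, 0. split. lra. intros t Ht. replace (c - (c + 0*t + 0*(t*t))) with 0 by ring.
  rewrite Rabs_R0; lra. Qed.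

Lemma rjet_id : rjet (fun t => t) 0 1 0.
Proof. exists 1, 0. split. lra. intros t Ht. replace (t - (0 + 1*t + 0*(t*t))) with 0 by ring.
  rewrite Rabs_R0; lra. Qed.

Lemma rjet_lin f g x0 x1 x2 y0 y1 y2 al be : rjet f x0 x1 x2 -> rjet g y0 y1 y2 ->
  rjet (fun t => al * f t + be * g t) (al*x0+be*y0) (al*x1+be*y1) (al*x2+be*y2).
Proof.
  intros [d1 [K1 [Hd1 H1]]] [d2 [K2 [Hd2 H2]]].
  exists (Rmin d1 d2), (Rabs al * K1 + Rabs be * K2). split. apply Rmin_glb_lt; lra.
  intros t Ht. pose proof (Rmin_l d1 d2). pose proof (Rmin_r d1 d2).
  specialize (H1 t ltac:(lra)). specialize (H2 t ltac:(lra)).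
  replace (al * f t + be * g t - ((al*x0+be*y0) + (al*x1+be*y1) * t + (al*x2+be*y2) * (t * t)))
    with (al * (f t - (x0 + x1*t + x2*(t*t))) + be * (g t - (y0 + y1*t + y2*(t*t)))) by ring.
  eapply Rle_trans. apply Rabs_triang. rewrite !Rabs_mult.
  pose proof (Rabs_pos al). pose proof (Rabs_pos be).
  apply (Rmult_le_compat_l (Rabs al)) in H1; auto. apply (Rmult_le_compat_l (Rabs be)) in H2; auto.
  nra.
Qed.

Lemma abs5 a b c d e : Rabs (a + b + c + d + e) <= Rabs a + Rabs b + Rabs c + Rabs d + Rabs e.
Proof.
  pose proof (Rabs_triang (a+b+c+d) e). pose proof (Rabs_triang (a+b+c) d).
  pose proof (Rabs_triang (a+b) c). pose proof (Rabs_triang a b). lra.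
Qed.

Lemma rjet_mul f g x0 x1 x2 y0 y1 y2 : rjet f x0 x1 x2 -> rjet g y0 y1 y2 ->
  rjet (fun t => f t * g t) (x0*y0) (x0*y1+x1*y0) (x0*y2+x1*y1+x2*y0).
Proof.
  intros [d1 [K1 [Hd1 H1]]] [d2 [K2 [Hd2 H2]]].
  set (A := Rabs x0 + Rabs x1 + Rabs x2). set (B := Rabs y0 + Rabs y1 + Rabs y2).
  set (c3 := x1*y2 + x2*y1). set (c4 := x2*y2).
  exists (Rmin (Rmin d1 d2) 1), (A * Rabs K2 + Rabs K1 * B + Rabs K1 * Rabs K2 + Rabs c3 + Rabs c4).
  split. apply Rmin_glb_lt; [apply Rmin_glb_lt|]; lra.
  intros t Ht. pose proof (Rmin_l (Rmin d1 d2) 1). pose proof (Rmin_r (Rmin d1 d2) 1).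
  pose proof (Rmin_l d1 d2). pose proof (Rmin_r d1 d2).
  specialize (H1 t ltac:(lra)). specialize (H2 t ltac:(lra)).
  remember (Rabs t) as TT eqn:HTT.
  set (p := x0 + x1 * t + x2 * (t*t)) in *. set (q := y0 + y1 * t + y2 * (t*t)) in *.
  set (e := f t - p) in *. set (e' := g t - q) in *.
  assert (HT : 0 < TT < 1) by lra.
  assert (Hp : Rabs p <= A).
  { unfold p, A. pose proof (Rabs_triang (x0 + x1*t) (x2*(t*t))). pose proof (Rabs_triang x0 (x1*t)).
    rewrite !Rabs_mult in *. rewrite <- HTT in *.
    pose proof (Rabs_pos x1). pose proof (Rabs_pos x2).
    assert (Rabs x1 * TT <= Rabs x1) by nra. assert (TT*TT <= 1) by nra. assert (Rabs x2 * (TT*TT) <= Rabs x2) by nra. lra. }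
  assert (Hq : Rabs q <= B).
  { unfold q, B. pose proof (Rabs_triang (y0 + y1*t) (y2*(t*t))). pose proof (Rabs_triang y0 (y1*t)).
    rewrite !Rabs_mult in *. rewrite <- HTT in *.
    pose proof (Rabs_pos y1). pose proof (Rabs_pos y2).
    assert (Rabs y1 * TT <= Rabs y1) by nra. assert (TT*TT <= 1) by nra. assert (Rabs y2 * (TT*TT) <= Rabs y2) by nra. lra. }
  assert (E : f t * g t - (x0*y0 + (x0*y1+x1*y0) * t + (x0*y2+x1*y1+x2*y0) * (t*t))
     = p * e' + e * q + e * e' + t^3 * c3 + t^4 * c4).
  { unfold e, e', p, q, c3, c4. ring. }
  rewrite E. eapply Rle_trans. apply abs5. rewrite !Rabs_mult, <- !RPow_abs. rewrite <- HTT.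
  assert (HT3 : 0 < TT^3) by (apply pow_lt; lra).
  assert (HK1 : Rabs e <= Rabs K1 * TT^3) by (pose proof (Rle_abs K1); nra).
  assert (HK2 : Rabs e' <= Rabs K2 * TT^3) by (pose proof (Rle_abs K2); nra).
  pose proof (Rabs_pos e). pose proof (Rabs_pos e'). pose proof (Rabs_pos p). pose proof (Rabs_pos q).
  pose proof (Rabs_pos K1). pose proof (Rabs_pos K2). pose proof (Rabs_pos c3). pose proof (Rabs_pos c4).
  assert (TT^4 <= TT^3) by (simpl; nra).
  assert (TT^3 <= 1) by (simpl; nra).
  assert (Rabs p * Rabs e' <= A * (Rabs K2 * TT^3)) by (apply Rmult_le_compat; auto).
  assert (Rabs e * Rabs q <= (Rabs K1 * TT^3) * B) by (apply Rmult_le_compat; auto).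
  assert (Rabs e * Rabs e' <= (Rabs K1 * TT^3) * (Rabs K2 * 1)).
  { apply Rmult_le_compat; auto. nra. }
  assert (TT^4 * Rabs c4 <= TT^3 * Rabs c4) by (apply Rmult_le_compat_r; auto).
  nra.
Qed.

Lemma rjet_small f x1 x2 : rjet f 0 x1 x2 -> exists d C, 0 < d /\ forall t, 0 < Rabs t < d -> Rabs (f t) <= C * Rabs t.
Proof.
  intros [d [K [Hd H]]]. exists (Rmin d 1), (Rabs x1 + Rabs x2 + Rabs K). split. apply Rmin_glb_lt; lra.
  intros t Ht. pose proof (Rmin_l d 1). pose proof (Rmin_r d 1).
  specialize (H t ltac:(lra)). remember (Rabs t) as TT eqn:HTT.
  assert (Rabs (f t) <= Rabs (f t - (0 + x1*t + x2*(t*t))) + Rabs x1 * TT + Rabs x2 * (TT*TT)).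
  { replace (f t) with ((f t - (0 + x1*t + x2*(t*t))) + x1 * t + x2*(t*t)) at 1 by ring.
    pose proof (Rabs_triang ((f t - (0 + x1*t + x2*(t*t))) + x1 * t) (x2*(t*t))).
    pose proof (Rabs_triang (f t - (0 + x1*t + x2*(t*t))) (x1 * t)).
    rewrite !Rabs_mult in *. rewrite <- HTT in *. lra. }
  pose proof (Rle_abs K). pose proof (Rabs_pos x1). pose proof (Rabs_pos x2).
  assert (K * TT^3 <= Rabs K * TT) by (apply Kpow; lra).
  assert (Rabs x2 * (TT*TT) <= Rabs x2 * TT) by (apply Rmult_le_compat_l; nra). lra.
Qed.


Definition cjet (F : R -> Cpx) (x0 x1 x2 : Cpx) : Prop :=
  rjet (fun t => Cre (F t)) (Cre x0) (Cre x1) (Cre x2) /\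
  rjet (fun t => Cim (F t)) (Cim x0) (Cim x1) (Cim x2).

Lemma rjet_coef f a b c a' b' c' : rjet f a b c -> a = a' -> b = b' -> c = c' -> rjet f a' b' c'.
Proof. intros H -> -> ->; exact H. Qed.

Lemma rjet_fext f g a b c : (forall t, f t = g t) -> rjet g a b c -> rjet f a b c.
Proof. intros H. apply rjet_ext. exists 1. split. lra. intros; auto. Qed.

Lemma cjet_unique F x0 x1 x2 y0 y1 y2 : cjet F x0 x1 x2 -> cjet F y0 y1 y2 ->
  x0 = y0 /\ x1 = y1 /\ x2 = y2.
Proof.
  intros [A B] [C D]. destruct (rjet_unique _ _ _ _ _ _ _ A C) as [? [? ?]].
  destruct (rjet_unique _ _ _ _ _ _ _ B D) as [? [? ?]].
  split; [|split]; apply Cext; auto.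
Qed.

Lemma cjet_const c : cjet (fun _ => c) c C0 C0.
Proof. split; apply rjet_const. Qed.

Lemma cjet_id : cjet (fun t => RtoC t) C0 Defs.C1 C0.
Proof. split. apply rjet_id. simpl. apply (rjet_const 0). Qed.

Lemma cjet_add F G x0 x1 x2 y0 y1 y2 : cjet F x0 x1 x2 -> cjet G y0 y1 y2 ->
  cjet (fun t => Cadd (F t) (G t)) (Cadd x0 y0) (Cadd x1 y1) (Cadd x2 y2).
Proof.
  intros [A B] [C D]. split.
  - eapply rjet_fext; [|eapply rjet_coef; [apply (rjet_lin _ _ _ _ _ _ _ _ 1 1 A C)|..]];
    [intros; cunf; ring| cunf; ring..].
  - eapply rjet_fext; [|eapply rjet_coef; [apply (rjet_lin _ _ _ _ _ _ _ _ 1 1 B D)|..]];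
    [intros; cunf; ring| cunf; ring..].
Qed.

Lemma cjet_mul F G x0 x1 x2 y0 y1 y2 : cjet F x0 x1 x2 -> cjet G y0 y1 y2 ->
  cjet (fun t => Cmul (F t) (G t)) (Cmul x0 y0) (Cadd (Cmul x0 y1) (Cmul x1 y0))
    (Cadd (Cadd (Cmul x0 y2) (Cmul x1 y1)) (Cmul x2 y0)).
Proof.
  intros [A B] [C D]. split.
  - pose proof (rjet_mul _ _ _ _ _ _ _ _ A C) as AC. pose proof (rjet_mul _ _ _ _ _ _ _ _ B D) as BD.
    eapply rjet_fext; [|eapply rjet_coef; [apply (rjet_lin _ _ _ _ _ _ _ _ 1 (-1) AC BD)|..]];
    [intros; cunf; ring| cunf; ring..].
  - pose proof (rjet_mul _ _ _ _ _ _ _ _ A D) as AD. pose proof (rjet_mul _ _ _ _ _ _ _ _ B C) as BC.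
    eapply rjet_fext; [|eapply rjet_coef; [apply (rjet_lin _ _ _ _ _ _ _ _ 1 1 AD BC)|..]];
    [intros; cunf; ring| cunf; ring..].
Qed.

Lemma cjet_ext F G x0 x1 x2 : (exists d, 0 < d /\ forall t, 0 < Rabs t < d -> F t = G t) ->
  cjet G x0 x1 x2 -> cjet F x0 x1 x2.
Proof.
  intros [d [Hd H]] [A B]. split; eapply rjet_ext; eauto; exists d; split; auto; intros t Ht; rewrite H; auto.
Qed.

Lemma cjet_perturb F G x0 x1 x2 :
  (exists d K, 0 < d /\ forall t, 0 < Rabs t < d -> N1 (Csub (F t) (G t)) <= K * Rabs t ^ 3) ->
  cjet G x0 x1 x2 -> cjet F x0 x1 x2.
Proof.
  intros [d [K [Hd H]]] [A B]. split; eapply rjet_perturb; eauto; exists d, K; split; auto; intros t Ht;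
  specialize (H t Ht).
  - eapply Rle_trans; [|exact H]. eapply Rle_trans; [|apply Re_le_N1]. cunf. apply Req_le. reflexivity.
  - eapply Rle_trans; [|exact H]. eapply Rle_trans; [|apply Im_le_N1]. cunf. apply Req_le. reflexivity.
Qed.

Lemma cjet_small F x1 x2 : cjet F C0 x1 x2 -> exists d C, 0 < d /\ 0 <= C /\
  forall t, 0 < Rabs t < d -> N1 (F t) <= C * Rabs t.
Proof.
  intros [A B]. destruct (rjet_small _ _ _ A) as [d1 [C1 [Hd1 H1]]].
  destruct (rjet_small _ _ _ B) as [d2 [C2 [Hd2 H2]]].
  exists (Rmin d1 d2), (Rabs C1 + Rabs C2). split. apply Rmin_glb_lt; lra. split.
  pose proof (Rabs_pos C1); pose proof (Rabs_pos C2); lra.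
  intros t Ht. pose proof (Rmin_l d1 d2). pose proof (Rmin_r d1 d2).
  specialize (H1 t ltac:(lra)). specialize (H2 t ltac:(lra)).
  pose proof (Rle_abs C1). pose proof (Rle_abs C2). unfold N1. nra.
Qed.

Lemma cjet_series F a : repr F a -> cjet (fun t => F (RtoC t)) (a O) (a 1%nat) (a 2%nat).
Proof.
  intros HF. destruct (series_local F a HF) as [K [HK H]].
  assert (G : forall t, 0 < Rabs t < 1/4 -> N1 (Csub (F (RtoC t)) (poly2 (a O) (a 1%nat) (a 2%nat) (RtoC t))) <= K * Rabs t ^ 3).
  { intros t Ht. rewrite <- N1_RtoC. apply H. rewrite N1_RtoC. lra. }
  split; exists (1/4), K; split; try lra; intros t Ht; specialize (G t Ht).
  - eapply Rle_trans; [|exact G]. eapply Rle_trans; [|apply Re_le_N1]. unfold poly2. cunf.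
    right. f_equal. ring.
  - eapply Rle_trans; [|exact G]. eapply Rle_trans; [|apply Im_le_N1]. unfold poly2. cunf.
    right. f_equal. ring.
Qed.

Lemma cjet_poly2 u c1 c2 B0 B1 B2 : cjet u C0 c1 c2 ->
  cjet (fun t => poly2 B0 B1 B2 (u t)) B0 (Cmul B1 c1) (Cadd (Cmul B1 c2) (Cmul B2 (Cmul c1 c1))).
Proof.
  intros Hu. unfold poly2.
  pose proof (cjet_mul _ _ _ _ _ _ _ _ Hu Hu) as Huu.
  pose proof (cjet_mul _ _ _ _ _ _ _ _ (cjet_const B1) Hu) as H1.
  pose proof (cjet_mul _ _ _ _ _ _ _ _ (cjet_const B2) Huu) as H2.
  pose proof (cjet_add _ _ _ _ _ _ _ _ H1 H2) as H3.
  pose proof (cjet_add _ _ _ _ _ _ _ _ (cjet_const B0) H3) as H4.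
  destruct H4 as [A B]. split; (eapply rjet_coef; [eassumption|..]); cunf; ring.
Qed.

Lemma cjet_comp Phi B u c1 c2 : repr Phi B -> cjet u C0 c1 c2 ->
  cjet (fun t => Phi (u t)) (B O) (Cmul (B 1%nat) c1) (Cadd (Cmul (B 1%nat) c2) (Cmul (B 2%nat) (Cmul c1 c1))).
Proof.
  intros HP Hu. apply cjet_perturb with (G := fun t => poly2 (B O) (B 1%nat) (B 2%nat) (u t)).
  2: apply cjet_poly2; auto.
  destruct (series_local Phi B HP) as [K [HK H]].
  destruct (cjet_small _ _ _ Hu) as [d [C [Hd [HC Hs]]]].
  exists (Rmin d (1 / (4 * (C + 1)))), (K * C ^ 3). split.
  apply Rmin_glb_lt; [lra|]. apply Rdiv_lt_0_compat; lra.
  intros t Ht. pose proof (Rmin_l d (1 / (4 * (C + 1)))). pose proof (Rmin_r d (1 / (4 * (C + 1)))).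
  specialize (Hs t ltac:(lra)).
  assert (Hut : N1 (u t) <= 1/4).
  { eapply Rle_trans. exact Hs. apply Rle_trans with ((C+1) * Rabs t). nra.
    apply (Rmult_le_compat_l (C+1)) in H1; [|lra].
    replace ((C + 1) * (1 / (4 * (C + 1)))) with (1/4) in H1 by (field; lra). nra. }
  eapply Rle_trans. apply H; auto.
  apply Rle_trans with (K * (C * Rabs t)^3); [apply Rmult_le_compat_l; auto; apply pow_incr; split; [apply N1_pos|auto] | right; ring].
Qed.

Lemma rjet_nonzero f x0 x1 x2 : rjet f x0 x1 x2 -> x0 <> 0 ->
  exists d, 0 < d /\ forall t, 0 < Rabs t < d -> f t <> 0.
Proof.
  intros H Hx.
  assert (H' : rjet (fun t => 1 * f t + (-1) * x0) 0 x1 x2).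
  { eapply rjet_coef. apply (rjet_lin _ _ _ _ _ _ _ _ 1 (-1) H (rjet_const x0)). ring. ring. ring. }
  destruct (rjet_small _ _ _ H') as [d [C [Hd HC]]].
  assert (HA : 0 < Rabs x0) by (apply Rabs_pos_lt; auto).
  exists (Rmin d (Rabs x0 / (2 * (Rabs C + 1)))). split.
  apply Rmin_glb_lt; [lra|]. apply Rdiv_lt_0_compat; [lra|]. pose proof (Rabs_pos C); lra.
  intros t Ht Hf. pose proof (Rmin_l d (Rabs x0 / (2 * (Rabs C + 1)))). pose proof (Rmin_r d (Rabs x0 / (2 * (Rabs C + 1)))).
  specialize (HC t ltac:(lra)). rewrite Hf in HC.
  replace (1 * 0 + -1 * x0) with (- x0) in HC by ring. rewrite Rabs_Ropp in HC.
  pose proof (Rle_abs C). pose proof (Rabs_pos C).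
  assert (Rabs t * (Rabs C + 1) <= Rabs x0 / 2).
  { apply (Rmult_le_compat_r (Rabs C + 1)) in H1; [|lra].
    replace (Rabs x0 / (2 * (Rabs C + 1)) * (Rabs C + 1)) with (Rabs x0 / 2) in H1 by (field; lra). nra. }
  nra.
Qed.


Lemma tsum_cos phi N : 2 * sin (phi/2) * sumN (fun k => cos (INR k * phi)) N
   = sin ((INR N - 1/2) * phi) + sin (phi / 2).
Proof.
  induction N; simpl sumN.
  - simpl INR. replace ((0 - 1/2) * phi) with (- (phi/2)) by field. rewrite sin_neg. ring.
  - rewrite Rmult_plus_distr_l, IHN, S_INR.
    replace ((INR N + 1 - 1/2) * phi) with (INR N * phi + phi/2) by field.
    replace ((INR N - 1/2) * phi) with (INR N * phi - phi/2) by field.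
    rewrite sin_plus, sin_minus. ring.
Qed.

Lemma tsum_sin phi N : 2 * sin (phi/2) * sumN (fun k => sin (INR k * phi)) N
   = cos (phi / 2) - cos ((INR N - 1/2) * phi).
Proof.
  induction N; simpl sumN.
  - simpl INR. replace ((0 - 1/2) * phi) with (- (phi/2)) by field. rewrite cos_neg. ring.
  - rewrite Rmult_plus_distr_l, IHN, S_INR.
    replace ((INR N + 1 - 1/2) * phi) with (INR N * phi + phi/2) by field.
    replace ((INR N - 1/2) * phi) with (INR N * phi - phi/2) by field.
    rewrite cos_plus, cos_minus. ring.
Qed.

Definition th (N : nat) : R := 2 * PI / INR N.

Lemma tsum_zero N m : (0 < N)%nat -> sin (INR m * PI / INR N) <> 0 ->
  sumN (fun k => cos (INR k * (INR m * th N))) N = 0 /\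
  sumN (fun k => sin (INR k * (INR m * th N))) N = 0.
Proof.
  intros HN Hs. set (phi := INR m * th N).
  assert (HN' : 0 < INR N) by (apply lt_0_INR; auto).
  assert (Hp2 : phi / 2 = INR m * PI / INR N) by (unfold phi, th; field; lra).
  assert (Hang : (INR N - 1/2) * phi = - (phi/2) + 2 * INR m * PI) by (unfold phi, th; field; lra).
  pose proof (tsum_cos phi N) as C. pose proof (tsum_sin phi N) as S.
  rewrite Hang, sin_period, sin_neg in C. rewrite Hang, cos_period, cos_neg in S.
  rewrite Hp2 in C, S.
  split.
  - apply (Rmult_eq_reg_l (2 * sin (INR m * PI / INR N))). lra. lra.
  - apply (Rmult_eq_reg_l (2 * sin (INR m * PI / INR N))). lra. lra.
Qed.

Lemma sin_ne_lo N m : (0 < m < N)%nat -> sin (INR m * PI / INR N) <> 0.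
Proof.
  intros H. assert (0 < INR m) by (apply lt_0_INR; lia). assert (INR m < INR N) by (apply lt_INR; lia).
  pose proof PI_RGT_0.
  apply Rgt_not_eq, Rlt_gt. apply sin_gt_0.
  - apply Rdiv_lt_0_compat; nra.
  - apply (Rmult_lt_reg_r (INR N)); [lra|]. unfold Rdiv. rewrite Rmult_assoc, Rinv_l, Rmult_1_r by lra. nra.
Qed.

Lemma sin_ne_hi N m : (N < m < 2 * N)%nat -> sin (INR m * PI / INR N) <> 0.
Proof.
  intros H. assert (0 < INR N) by (apply lt_0_INR; lia). assert (INR N < INR m) by (apply lt_INR; lia).
  assert (INR m < 2 * INR N) by (replace 2 with (INR 2) by reflexivity; rewrite <- mult_INR; apply lt_INR; lia).
  pose proof PI_RGT_0.
  apply Rlt_not_eq. apply sin_lt_0.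
  - apply (Rmult_lt_reg_r (INR N)); [lra|]. unfold Rdiv. rewrite Rmult_assoc, Rinv_l, Rmult_1_r by lra. nra.
  - apply (Rmult_lt_reg_r (INR N)); [lra|]. unfold Rdiv. rewrite Rmult_assoc, Rinv_l, Rmult_1_r by lra. nra.
Qed.

Lemma demoivre a j : Cpow (mkC (cos a) (sin a)) j = mkC (cos (INR j * a)) (sin (INR j * a)).
Proof.
  induction j.
  - simpl. rewrite Rmult_0_l, cos_0, sin_0. reflexivity.
  - simpl Cpow. rewrite IHj, S_INR. apply Cext; cunf;
    replace ((INR j + 1) * a) with (a + INR j * a) by ring; [rewrite cos_plus|rewrite sin_plus]; ring.
Qed.

Lemma Cpow_scal r u j : Cpow (Cmul (RtoC r) u) j = Cmul (RtoC (r ^ j)) (Cpow u j).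
Proof. induction j; simpl. ceq. rewrite IHj. ceq. Qed.

Lemma Re_le_Cmod x : Cre x <= Cmod x.
Proof.
  unfold Cmod, Cnorm2. eapply Rle_trans. apply Rle_abs.
  rewrite <- sqrt_Rsqr_abs. apply sqrt_le_1. apply Rle_0_sqr. nra. unfold Rsqr. nra.
Qed.

Lemma Cnorm2_mul z w : Cnorm2 (Cmul z w) = Cnorm2 z * Cnorm2 w.
Proof. unfold Cnorm2; cunf; ring. Qed.

Lemma Cnorm2_pos z : 0 <= Cnorm2 z.
Proof. unfold Cnorm2; nra. Qed.

Lemma Cmod_mul z w : Cmod (Cmul z w) = Cmod z * Cmod w.
Proof. unfold Cmod. rewrite Cnorm2_mul. apply sqrt_mult; apply Cnorm2_pos. Qed.

Lemma Cmod_pos z : 0 <= Cmod z.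
Proof. apply sqrt_pos. Qed.

Lemma Cmod_unit a : Cmod (mkC (cos a) (sin a)) = 1.
Proof. unfold Cmod, Cnorm2; simpl. rewrite <- sqrt_1. f_equal. pose proof (sin2_cos2 a). unfold Rsqr in H. lra. Qed.

Lemma sumN_le_const f b N : (forall k, f k <= b) -> sumN f N <= INR N * b.
Proof. intros H; induction N; simpl sumN. simpl; lra. rewrite S_INR. specialize (H N). lra. Qed.

Lemma sumN_plus f g N : sumN (fun k => f k + g k) N = sumN f N + sumN g N.
Proof. induction N; simpl. ring. rewrite IHN; ring. Qed.

Lemma sumN_ext_eq f g N : (forall k, f k = g k) -> sumN f N = sumN g N.
Proof. intros H; induction N; simpl. ring. rewrite IHN, H; ring. Qed.

Lemma Un_cv_ext u v l : (forall n, u n = v n) -> Un_cv u l -> Un_cv v l.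
Proof. intros H Hu e He. destruct (Hu e He) as [N HN]. exists N. intros n Hn. rewrite <- H. auto. Qed.

Lemma cv_sumN (g : nat -> nat -> R) (l : nat -> R) N :
  (forall k, Un_cv (g k) (l k)) -> Un_cv (fun M => sumN (fun k => g k M) N) (sumN l N).
Proof.
  intros H. induction N; simpl.
  - apply cv_const.
  - apply CV_plus; auto.
Qed.


Definition omg (N k : nat) : Cpx := mkC (cos (INR k * th N)) (sin (INR k * th N)).
Definition vv (N k : nat) : Cpx := mkC (cos (INR k * (INR (N-2) * th N))) (sin (INR k * (INR (N-2) * th N))).
Definition zz r N k := Cmul (RtoC r) (omg N k).
Definition EE e (c : nat -> Cpx) r j := Cmul e (Cmul (c j) (RtoC (r^j))).
Definition DD e c r N j := sumN (fun k => Cre (Cmul (Cmul e (Cmul (c j) (Cpow (zz r N k) j))) (vv N k))) N.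
Definition SS e c r N M := sumN (fun k => Cre (Cmul (Cmul e (psum c (zz r N k) M)) (vv N k))) N.

Lemma sumN_lin a b f g N : sumN (fun k => a * f k - b * g k) N = a * sumN f N - b * sumN g N.
Proof. induction N; simpl. ring. rewrite IHN; ring. Qed.

Lemma sumN_0 N : sumN (fun _ => 0) N = 0.
Proof. induction N; simpl; lra. Qed.

Lemma DD_eq e c r N j : DD e c r N j =
  Cre (EE e c r j) * sumN (fun k => cos (INR k * (INR (j + (N-2)) * th N))) N -
  Cim (EE e c r j) * sumN (fun k => sin (INR k * (INR (j + (N-2)) * th N))) N.
Proof.
  unfold DD. rewrite <- sumN_lin. apply sumN_ext_eq. intros k.
  unfold zz, omg. rewrite Cpow_scal, demoivre.
  replace (INR k * (INR (j + (N - 2)) * th N)) with (INR j * (INR k * th N) + INR k * (INR (N-2) * th N))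
    by (rewrite plus_INR; ring).
  rewrite cos_plus, sin_plus. unfold EE, vv. cunf. ring.
Qed.

Lemma DD_zero e c r N j : (0 < N)%nat -> sin (INR (j + (N-2)) * PI / INR N) <> 0 -> DD e c r N j = 0.
Proof.
  intros HN Hs. rewrite DD_eq. destruct (tsum_zero N (j + (N-2)) HN Hs) as [A B].
  rewrite A, B. ring.
Qed.

Lemma sumN_ge_const f b N : (forall k, b <= f k) -> INR N * b <= sumN f N.
Proof. intros H; induction N; simpl sumN. simpl; lra. rewrite S_INR. specialize (H N). lra. Qed.

Lemma DD_lower e c r N j : - (INR N * N1 (EE e c r j)) <= DD e c r N j.
Proof.
  rewrite DD_eq, <- sumN_lin. replace (- (INR N * N1 (EE e c r j))) with (INR N * (- N1 (EE e c r j))) by ring.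
  apply sumN_ge_const. intros k. set (E := EE e c r j).
  set (a := INR k * (INR (j + (N - 2)) * th N)).
  pose proof (COS_bound a). pose proof (SIN_bound a).
  unfold N1. pose proof (Rabs_pos (Cre E)). pose proof (Rabs_pos (Cim E)).
  assert (- Rabs (Cre E) <= Cre E * cos a).
  { destruct (Rcase_abs (Cre E)); [rewrite Rabs_left|rewrite Rabs_right]; nra. }
  assert (Cim E * sin a <= Rabs (Cim E)).
  { destruct (Rcase_abs (Cim E)); [rewrite Rabs_left|rewrite Rabs_right]; nra. }
  lra.
Qed.

Lemma th_N N : (0 < N)%nat -> INR N * th N = 2 * PI.
Proof. intros H. unfold th. assert (0 < INR N) by (apply lt_0_INR; auto). field. lra. Qed.

Lemma DD_two c r N : (2 <= N)%nat ->
  DD (Cconj (c 2%nat)) c r N 2 = INR N * (r ^ 2 * Cnorm2 (c 2%nat)).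
Proof.
  intros HN. rewrite DD_eq.
  replace (2 + (N - 2))%nat with N by lia.
  rewrite (sumN_ext_eq _ (fun _ => 1)), (sumN_ext_eq (fun k => sin _) (fun _ => 0)).
  - assert (forall N, sumN (fun _ => 1) N = INR N) by (induction N0; simpl sumN; [simpl; ring| rewrite S_INR; lra]).
    assert (forall N, sumN (fun _ => 0) N = 0) by (induction N0; simpl sumN; lra).
    rewrite H, H0. unfold EE, Cnorm2. cunf. ring.
  - intros k. rewrite th_N by lia. replace (INR k * (2 * PI)) with (0 + 2 * INR k * PI) by ring.
    rewrite sin_period. apply sin_0.
  - intros k. rewrite th_N by lia. replace (INR k * (2 * PI)) with (0 + 2 * INR k * PI) by ring.
    rewrite cos_period. apply cos_0.
Qed.

Lemma SS_step e c r N M : SS e c r N (S M) = SS e c r N M + DD e c r N (S M).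
Proof.
  unfold SS, DD. rewrite <- sumN_plus. apply sumN_ext_eq. intros k. simpl psum. cunf. ring.
Qed.

Lemma SS_zero e c r N : c O = C0 -> SS e c r N 0 = 0.
Proof.
  intros H. unfold SS. simpl psum. rewrite H.
  rewrite (sumN_ext_eq _ (fun _ => 0)). apply sumN_0. intros k. cunf. ring.
Qed.


Lemma avg (w : Cpx -> Cpx) c r rho M0 N :
  repr w c -> c O = C0 -> (forall z, in_U z -> in_U (w z)) -> 0 < r < rho -> rho < 1 ->
  (forall n, N1 (c n) * rho ^ n <= M0) -> (3 <= N)%nat ->
  r^2 * Cnorm2 (c 2%nat) - N1 (Cconj (c 2%nat)) * M0 * (r/rho)^(N+2) / (1 - r/rho) <= Cmod (Cconj (c 2%nat)).
Proof.
  intros Hw Hc0 Hmap Hr Hrho HM HN.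
  set (e := Cconj (c 2%nat)). set (x := r / rho). set (n2 := Cnorm2 (c 2%nat)).
  assert (HNp : 0 < INR N) by (apply lt_0_INR; lia).
  assert (Hx : 0 <= x < 1).
  { unfold x. split. unfold Rdiv; apply Rmult_le_pos; [lra|]; apply Rlt_le, Rinv_0_lt_compat; lra. apply (Rmult_lt_reg_r rho); [lra|].
    unfold Rdiv. rewrite Rmult_assoc, Rinv_l by lra. lra. }
  assert (HM0 : 0 <= M0) by (specialize (HM O); simpl in HM; pose proof (N1_pos (c O)); lra).
  set (q := fun j => if Nat.leb (N+2) j then N1 (EE e c r j) else 0).
  assert (Hq0 : forall j, 0 <= q j) by (intros j; unfold q; destruct (Nat.leb (N+2) j); [apply N1_pos|lra]).
  assert (HA : forall k, INR N * (r^2 * n2) - INR N * sumN q (S (2 + k)) <= SS e c r N (2 + k)).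
  { induction k.
    - simpl Nat.add. rewrite !SS_step, SS_zero by auto.
      rewrite DD_zero. 2: lia. 2: apply sin_ne_lo; lia.
      unfold e. rewrite DD_two by lia. fold e n2.
      assert (0 <= sumN q 3) by (simpl; pose proof (Hq0 O); pose proof (Hq0 1%nat); pose proof (Hq0 2%nat); lra).
      nra.
    - replace (2 + S k)%nat with (S (2 + k)) by lia. rewrite SS_step.
      change (sumN q (S (S (2 + k)))) with (sumN q (S (2 + k)) + q (S (2 + k))).
      assert (- (INR N * q (S (2 + k))) <= DD e c r N (S (2 + k))).
      { unfold q. destruct (Nat.leb_spec (N+2) (S (2 + k))).
        - apply DD_lower.
        - rewrite DD_zero. lra. lia. apply sin_ne_hi. lia. }
      lra. }
  set (G := N1 e * M0 * x ^ (N + 2) / (1 - x)).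
  assert (HB : forall n, sumN q n <= G).
  { intros n. apply Rle_trans with (sumN (fun j => (N1 e * M0) * gterm x (N+2) j) n).
    - apply sumN_ext. intros j. unfold q, gterm. destruct (Nat.leb (N+2) j); [|lra].
      unfold EE. eapply Rle_trans. apply N1_mul. rewrite Rmult_assoc. apply Rmult_le_compat_l. apply N1_pos.
      eapply Rle_trans. apply N1_mul. rewrite N1_RtoC, Rabs_pos_eq by (apply pow_le; lra).
      specialize (HM j).
      replace (r ^ j) with (rho ^ j * x ^ j) by (unfold x; rewrite <- Rpow_mult_distr; f_equal; field; lra).
      rewrite <- Rmult_assoc. apply Rmult_le_compat_r. apply pow_le; lra. exact HM.
    - rewrite sumN_scal. unfold G. unfold Rdiv. rewrite (Rmult_assoc (N1 e * M0)).
      apply Rmult_le_compat_l. pose proof (N1_pos e); nra. apply geo_bound; auto. }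
  assert (HzU : forall k, in_U (zz r N k)).
  { intros k. unfold in_U, zz. rewrite Cmod_mul, Cmod_RtoC, Rabs_pos_eq by lra. unfold omg. rewrite Cmod_unit. lra. }
  set (Sinf := sumN (fun k => Cre (Cmul (Cmul e (w (zz r N k))) (vv N k))) N).
  assert (HC : Un_cv (fun M => SS e c r N M) Sinf).
  { unfold SS, Sinf. apply (cv_sumN (fun k M => Cre (Cmul (Cmul e (psum c (zz r N k) M)) (vv N k)))).
    intros k. destruct (Hw _ (HzU k)) as [Hre Him].
    set (v := vv N k).
    pose proof (cv_lin _ _ _ _ (Cre e * Cre v - Cim e * Cim v) (- (Cre e * Cim v + Cim e * Cre v)) Hre Him) as L.
    replace (Cre (Cmul (Cmul e (w (zz r N k))) v)) with
      ((Cre e * Cre v - Cim e * Cim v) * Cre (w (zz r N k)) + - (Cre e * Cim v + Cim e * Cre v) * Cim (w (zz r N k)))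
      by (cunf; ring).
    eapply Un_cv_ext; [|exact L]. intros M. simpl. cunf. ring. }
  assert (HD : Sinf <= INR N * Cmod e).
  { unfold Sinf. apply sumN_le_const. intros k. eapply Rle_trans. apply Re_le_Cmod.
    rewrite !Cmod_mul. unfold vv. rewrite Cmod_unit.
    pose proof (Hmap _ (HzU k)) as Hu. unfold in_U in Hu.
    pose proof (Cmod_pos e). pose proof (Cmod_pos (w (zz r N k))). nra. }
  assert (HL : INR N * (r^2 * n2) - INR N * G <= Sinf).
  { apply (cv_ge _ _ _ 2%nat HC). intros M HM2. replace M with (2 + (M - 2))%nat by lia.
    eapply Rle_trans; [|apply HA]. specialize (HB (S (2 + (M - 2)))). nra. }
  assert (INR N * (r^2 * n2 - G) <= INR N * Cmod e) by lra.
  apply Rmult_le_reg_l in H; auto.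
Qed.


Lemma coef2_le (w : Cpx -> Cpx) c : repr w c -> c O = C0 -> (forall z, in_U z -> in_U (w z)) ->
  Cnorm2 (c 2%nat) <= 1.
Proof.
  intros Hw Hc0 Hmap.
  set (n2 := Cnorm2 (c 2%nat)). set (e := Cconj (c 2%nat)).
  assert (He : Cmod e = sqrt n2) by (unfold Cmod, e, n2, Cnorm2; cunf; f_equal; ring).
  assert (Hn2 : 0 <= n2) by apply Cnorm2_pos.
  assert (Hr : forall r, 0 < r < 1 -> r^2 * n2 <= sqrt n2).
  { intros r Hr. set (rho := (1 + r)/2).
    destruct (coef_bound w c rho Hw) as [M0 HM]; [unfold rho; lra|].
    assert (HM0 : 0 <= M0) by (specialize (HM O); simpl in HM; pose proof (N1_pos (c O)); lra).
    set (x := r / rho).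
    assert (Hx : 0 <= x < 1).
    { unfold x, rho. split. unfold Rdiv; apply Rmult_le_pos; [lra|]; apply Rlt_le, Rinv_0_lt_compat; lra.
      apply (Rmult_lt_reg_r ((1+r)/2)); [lra|].
      unfold Rdiv. rewrite Rmult_assoc, Rinv_l by lra. lra. }
    set (C := N1 e * M0). assert (HC : 0 <= C) by (unfold C; pose proof (N1_pos e); nra).
    destruct (Rle_dec (r^2 * n2) (sqrt n2)) as [|Hn]; auto. exfalso.
    set (d := r^2 * n2 - sqrt n2). assert (Hd : 0 < d) by (unfold d; lra).
    destruct (pow_lt_1_zero x ltac:(rewrite Rabs_pos_eq; lra) (d * (1 - x) / (C + 1))) as [N0 HN0].
    { apply Rdiv_lt_0_compat; nra. }
    specialize (HN0 (N0 + 3 + 2)%nat ltac:(lia)). rewrite Rabs_pos_eq in HN0 by (apply pow_le; lra).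
    pose proof (avg w c r rho M0 (N0 + 3) Hw Hc0 Hmap ltac:(unfold rho; lra) ltac:(unfold rho; lra) HM ltac:(lia)) as A.
    fold n2 e x in A. rewrite He in A. fold C in A.
    assert (C * x ^ (N0 + 3 + 2) / (1 - x) < d).
    { apply (Rmult_lt_reg_r (1 - x)); [lra|]. unfold Rdiv. rewrite Rmult_assoc, Rinv_l, Rmult_1_r by lra.
      apply Rle_lt_trans with (C * (d * (1 - x) / (C + 1))). apply Rmult_le_compat_l; lra.
      apply (Rmult_lt_reg_r (C+1)); [lra|]. unfold Rdiv.
      replace (C * (d * (1 - x) * / (C + 1)) * (C + 1)) with (C * (d * (1 - x))) by (field; lra).
      assert (0 < d * (1 - x)) by nra. nra. }
    unfold d in H. lra. }
  destruct (Rle_dec n2 1) as [|Hn]; auto. exfalso.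
  assert (Hs1 : 1 < sqrt n2) by (rewrite <- sqrt_1; apply sqrt_lt_1; lra).
  assert (Hss : sqrt n2 * sqrt n2 = n2) by (apply sqrt_sqrt; lra).
  set (q := sqrt n2 / n2).
  assert (Hq : 0 < q < 1).
  { unfold q. split. apply Rdiv_lt_0_compat; lra. apply (Rmult_lt_reg_r n2); [lra|].
    unfold Rdiv. rewrite Rmult_assoc, Rinv_l by lra. nra. }
  specialize (Hr ((1 + q)/2) ltac:(lra)).
  assert (q < ((1+q)/2)^2) by (simpl; nra).
  assert (q * n2 = sqrt n2) by (unfold q; field; lra).
  nra.
Qed.


Lemma in_U_C0 : in_U C0.
Proof. unfold in_U, Cmod, Cnorm2, C0; simpl. replace (0*0+0*0) with 0 by ring. rewrite sqrt_0. lra. Qed.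

Lemma psum_C0 a N : psum a C0 N = a O.
Proof. induction N; simpl. reflexivity. rewrite IHN. ceq. Qed.

Lemma repr_0 F a : repr F a -> F C0 = a O.
Proof.
  intros H. destruct (H C0 in_U_C0) as [A B]. apply Cext.
  - apply (UL_sequence (fun N => Cre (psum a C0 N))); auto.
    eapply Un_cv_ext; [|apply cv_const]. intros n. rewrite psum_C0. reflexivity.
  - apply (UL_sequence (fun N => Cim (psum a C0 N))); auto.
    eapply Un_cv_ext; [|apply cv_const]. intros n. rewrite psum_C0. reflexivity.
Qed.

Lemma psum_factor a z N : a O = C0 -> psum a z (S N) = Cmul z (psum (shift a) z N).
Proof.
  intros H. induction N.
  - simpl. rewrite H. unfold shift. ceq.
  - change (psum a z (S (S N))) with (Cadd (psum a z (S N)) (Cmul (a (S (S N))) (Cpow z (S (S N))))).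
    rewrite IHN. simpl. unfold shift. ceq.
Qed.

Lemma repr_factor F a H : repr F a -> a O = C0 -> repr H (shift a) -> forall z, in_U z -> F z = Cmul z (H z).
Proof.
  intros HF Ha HH z Hz. destruct (HF z Hz) as [A B]. destruct (HH z Hz) as [C D].
  pose proof (CV_shift' _ 1 _ A) as A'. pose proof (CV_shift' _ 1 _ B) as B'.
  apply Cext.
  - apply (UL_sequence _ _ _ A').
    replace (Cre (Cmul z (H z))) with (Cre z * Cre (H z) + - Cim z * Cim (H z)) by (cunf; ring).
    eapply Un_cv_ext; [|apply (cv_lin _ _ _ _ (Cre z) (- Cim z) C D)].
    intros n. replace (n + 1)%nat with (S n) by lia. rewrite psum_factor by auto. cunf. ring.
  - apply (UL_sequence _ _ _ B').
    replace (Cim (Cmul z (H z))) with (Cre z * Cim (H z) + Cim z * Cre (H z)) by (cunf; ring).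
    eapply Un_cv_ext; [|apply (cv_lin _ _ _ _ (Cre z) (Cim z) D C)].
    intros n. replace (n + 1)%nat with (S n) by lia. rewrite psum_factor by auto. cunf. ring.
Qed.

Lemma Cdiv_mul x y : Cnorm2 y <> 0 -> Cmul (Cdiv x y) y = x.
Proof.
  intros Hy. unfold Cdiv, Cinv. apply Cext; cunf; unfold Cnorm2 in *; field; auto.
Qed.

Lemma star_coef phi B a : repr phi B -> B O = Defs.C1 -> a 1%nat = Defs.C1 -> starlike_subord a phi ->
  exists c1 c2, Cnorm2 c2 <= 1 /\ a 2%nat = Cmul (B 1%nat) c1 /\
  Cmul (RtoC 2) (a 3%nat) = Cadd (Cmul (Cmul (B 1%nat) c1) (a 2%nat)) (Cadd (Cmul (B 1%nat) c2) (Cmul (B 2%nat) (Cmul c1 c1))).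
Proof.
  intros Hphi HB0 Ha1 [fp [h [Hfp [Hh [w [cc [Hw [Hc0 [Hmap Heq]]]]]]]]].
  exists (cc 1%nat), (cc 2%nat). split. eapply coef2_le; eauto.
  pose proof (cjet_series h _ Hh) as Jh. unfold shift in Jh. rewrite Ha1 in Jh.
  pose proof (cjet_series fp _ Hfp) as Jfp.
  pose proof (cjet_series w _ Hw) as Jw. rewrite Hc0 in Jw.
  pose proof (cjet_comp phi B _ _ _ Hphi Jw) as Jpw. rewrite HB0 in Jpw.
  pose proof (cjet_mul _ _ _ _ _ _ _ _ Jpw Jh) as Jp.
  assert (Jfp' : cjet (fun t => fp (RtoC t)) (Cmul Defs.C1 Defs.C1)
     (Cadd (Cmul Defs.C1 (a 2%nat)) (Cmul (Cmul (B 1%nat) (cc 1%nat)) Defs.C1))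
     (Cadd (Cadd (Cmul Defs.C1 (a 3%nat)) (Cmul (Cmul (B 1%nat) (cc 1%nat)) (a 2%nat)))
        (Cmul (Cadd (Cmul (B 1%nat) (cc 2%nat)) (Cmul (B 2%nat) (Cmul (cc 1%nat) (cc 1%nat)))) Defs.C1))).
  { eapply cjet_ext; [|exact Jp].
    destruct Jh as [Jhr _]. destruct (rjet_nonzero _ _ _ _ Jhr) as [d [Hd Hnz]]. simpl; lra.
    exists (Rmin d 1). split. apply Rmin_glb_lt; lra.
    intros t Ht. pose proof (Rmin_l d 1). pose proof (Rmin_r d 1).
    assert (HU : in_U (RtoC t)) by (unfold in_U; rewrite Cmod_RtoC; lra).
    rewrite <- (Heq _ HU). rewrite Cdiv_mul; auto.
    specialize (Hnz t ltac:(lra)). unfold Cnorm2. intro HH. apply Hnz. nra. }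
  destruct (cjet_unique _ _ _ _ _ _ _ Jfp Jfp') as [_ [E1 E2]].
  unfold dcoef in E1, E2. simpl INR in E1, E2.
  assert (A2 : a 2%nat = Cmul (B 1%nat) (cc 1%nat)).
  { apply (f_equal Cre) in E1 as R1. apply (f_equal Cim) in E1 as I1. cunf. apply Cext; cunf; lra. }
  split; auto.
  apply (f_equal Cre) in E2 as R2. apply (f_equal Cim) in E2 as I2. cunf. apply Cext; cunf; lra.
Qed.


Theorem corollary3p11 (phi : Cpx -> Cpx) (B : nat -> Cpx)
  (f : Cpx -> Cpx) (a : nat -> Cpx) :
  MaMinda phi B -> bi_starlike f a phi ->
  Cmod (Csub (a 3%nat) (Cmul (a 2%nat) (a 2%nat))) <= Cre (B 1%nat) / 2.
Proof.
  intros [Hphi [_ [_ [HB0 [HBim [HB1 _]]]]]]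
         [Hf [Ha0 [Ha1 [Hfu [Sa [g [b [Hg [_ [[r0 [Hr0 Hinv]] Sb]]]]]]]]]].
  assert (Hb0 : b O = C0).
  { rewrite <- (repr_0 g b Hg).
    assert (Hc : Cmod C0 < r0) by (pose proof in_U_C0 as H; unfold in_U in H; unfold Cmod, Cnorm2, C0 in *; simpl in *;
      replace (0*0+0*0) with 0 in * by ring; rewrite sqrt_0 in *; lra).
    destruct (Hinv C0 Hc) as [HU HE]. apply Hfu; auto. apply in_U_C0.
    rewrite HE, (repr_0 f a Hf). auto. }
  destruct Sa as [fpa [ha [Hfpa [Hha Hsa]]]].
  destruct Sb as [fpb [hb [Hfpb [Hhb Hsb]]]].
  assert (Jg := cjet_series g b Hg). rewrite Hb0 in Jg.
  assert (Jhf := cjet_comp ha (shift a) _ _ _ Hha Jg).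
  assert (Jhg := cjet_series hb (shift b) Hhb).
  assert (Jp := cjet_mul _ _ _ _ _ _ _ _ Jhg Jhf).
  assert (Jc : cjet (fun t => Cmul (hb (RtoC t)) (ha (g (RtoC t)))) Defs.C1 C0 C0).
  { eapply cjet_ext; [|apply cjet_const].
    exists (Rmin r0 1). split. apply Rmin_glb_lt; lra.
    intros t Ht. pose proof (Rmin_l r0 1). pose proof (Rmin_r r0 1).
    assert (HU : in_U (RtoC t)) by (unfold in_U; rewrite Cmod_RtoC; lra).
    assert (Hc : Cmod (RtoC t) < r0) by (rewrite Cmod_RtoC; lra).
    destruct (Hinv _ Hc) as [HgU HE].
    rewrite (repr_factor f a ha Hf Ha0 Hha _ HgU) in HE.
    rewrite (repr_factor g b hb Hg Hb0 Hhb _ HU) in HE.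
    set (X := Cmul (hb (RtoC t)) (ha (g (RtoC t)))).
    assert (HE' : Cmul (RtoC t) X = RtoC t).
    { rewrite <- HE at 2. unfold X. rewrite (repr_factor g b hb Hg Hb0 Hhb _ HU). ceq. }
    assert (t <> 0) by (intro; subst; rewrite Rabs_R0 in Ht; lra).
    apply (f_equal Cre) in HE' as R. apply (f_equal Cim) in HE' as I. cunf.
    apply Cext; simpl.
    - apply (Rmult_eq_reg_l t); auto. lra.
    - apply (Rmult_eq_reg_l t); auto. lra. }
  destruct (cjet_unique _ _ _ _ _ _ _ Jp Jc) as [E0 [E1 E2]].
  unfold shift in E0, E1, E2. rewrite Ha1 in E0, E1, E2.
  assert (Hb1 : b 1%nat = Defs.C1).
  { apply (f_equal Cre) in E0 as R. apply (f_equal Cim) in E0 as I. apply Cext; cunf; lra. }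
  rewrite Hb1 in E1, E2.
  assert (Hb2 : b 2%nat = Copp (a 2%nat)).
  { apply (f_equal Cre) in E1 as R. apply (f_equal Cim) in E1 as I. apply Cext; cunf; lra. }
  rewrite Hb2 in E2.
  assert (Hb3 : b 3%nat = Csub (Cmul (RtoC 2) (Cmul (a 2%nat) (a 2%nat))) (a 3%nat)).
  { apply (f_equal Cre) in E2 as R. apply (f_equal Cim) in E2 as I. apply Cext; cunf; lra. }
  destruct (star_coef phi B a Hphi HB0 Ha1 (ex_intro _ fpa (ex_intro _ ha (conj Hfpa (conj Hha Hsa)))))
    as [c1 [c2 [Hc2 [Ea2 Ea3]]]].
  destruct (star_coef phi B b Hphi HB0 Hb1 (ex_intro _ fpb (ex_intro _ hb (conj Hfpb (conj Hhb Hsb)))))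
    as [d1 [d2 [Hd2 [Eb2 Eb3]]]].
  rewrite Hb2 in Eb2, Eb3. rewrite Hb3 in Eb3.
  set (be := Cre (B 1%nat)). assert (Hbe : 0 < be) by exact HB1.
  assert (HB1e : B 1%nat = RtoC be) by (apply Cext; unfold be; cunf; auto).
  rewrite HB1e in *.
  assert (Hd1 : d1 = Copp c1).
  { rewrite Ea2 in Eb2. apply (f_equal Cre) in Eb2 as R. apply (f_equal Cim) in Eb2 as I. cunf.
    apply Cext; cunf; apply (Rmult_eq_reg_l be); try lra; lra. }
  subst d1.
  set (X := Csub (a 3%nat) (Cmul (a 2%nat) (a 2%nat))).
  assert (HX : X = Cmul (RtoC (be / 4)) (Csub c2 d2)).
  { unfold X. rewrite Ea2 in *.
    apply (f_equal Cre) in Ea3 as R1. apply (f_equal Cim) in Ea3 as I1.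
    apply (f_equal Cre) in Eb3 as R2. apply (f_equal Cim) in Eb3 as I2.
    apply Cext; cunf; lra. }
  rewrite HX. unfold Cmod.
  rewrite Cnorm2_mul.
  assert (Cnorm2 (Csub c2 d2) <= 4).
  { unfold Cnorm2 in *. cunf. pose proof (pow2_ge_0 (Cre c2 + Cre d2)). pose proof (pow2_ge_0 (Cim c2 + Cim d2)). nra. }
  assert (Cnorm2 (RtoC (be / 4)) = (be/4)^2) by (unfold Cnorm2; cunf; ring).
  rewrite H0. rewrite <- (sqrt_square (be/2)) by lra. apply sqrt_le_1.
  apply Rmult_le_pos. apply pow2_ge_0. apply Cnorm2_pos. nra.
  assert (0 <= (be/4)^2) by apply pow2_ge_0.
  replace (be/2 * (be/2)) with ((be/4)^2 * 4) by field. apply Rmult_le_compat_l; auto.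
Qed.
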